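(* Let $d\ge0$ and $n>d$ be integers and let $\gamma=(\gamma_1,\dots,\gamma_l)$, $l\ge1$, be a partition with positive parts (i.e. $\gamma\neq(0)$). Enumerate $2^{\{1,\dots,l\}}=\{I_1,\dots,I_{2^l}\}$ with $I_1=\emptyset$. Then $$\lambda_{n,d}(\gamma)=\frac{1}{\prod_{k=1}^{d}m_k(\gamma)!}\sum_{\nu\in N(n,d;\gamma)}\frac{n!}{\nu(I_1)!\,\nu(I_2)!\cdots\nu(I_{2^l})!} =\frac{1}{\prod_{k=1}^{d}m_k(\gamma)!}\sum_{\nu\in N(n,d;\gamma)}\frac{(\nu(I_2)+\cdots+\nu(I_{2^l}))!}{\nu(I_2)!\cdots\nu(I_{2^l})!}\binom{n}{\nu(I_2)+\cdots+\nu(I_{2^l})}.$$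
   Context: For a finite set $X$ let $\operatorname{codim}_d(X)=d+1-|X|$. For a finite collection $\{T_1,\dots,T_l\}$ of pairwise distinct finite sets put $\rho_d(\{T_1,\dots,T_l\})=\sum_{i=1}^l\operatorname{codim}_d(T_i)$ (with $\rho_d(\emptyset)=0$) and $D_d(\{T_1,\dots,T_l\})=\operatorname{codim}_d(T_1\cap\cdots\cap T_l)-\rho_d(\{T_1,\dots,T_l\})$. For integers $d\ge0$, $n>d$, $L(n,d)$ is the set of all collections $T$ of subsets of $\{1,\dots,n\}$ such that (i) $D_d(T')>0$ for every $T'\subset T$ with $|T'|>1$, and (ii) $0\le|T_i|\le d$ for every $T_i\in T$. A partition is a weakly decreasing sequence of nonnegative integers. The type of $T=\{T_1,\dots,T_l\}\in L(n,d)$, listed so that $|T_1|\le\cdots\le|T_l|$, is $\gamma_d(T)=(\operatorname{codim}_d(T_1),\dots,\operatorname{codim}_d(T_l))$ (and $\gamma_d(\emptyset)=(0)$). $\lambda_{n,d}(\gamma)$ is the number of $T\in L(n,d)$ with $\gamma_d(T)=\gamma$. $m_k(\gamma)=|\{i:\gamma_i=k\}|$. $N(n,d;\gamma)$ is the set of maps $\nu:2^{\{1,\dots,l\}}\to\mathbb{Z}_{\ge0}$ such that: (1) $\sum_{I:\,i\in I}\nu(I)=d+1-\gamma_i$ for all $i=1,\dots,l$; (2) $\sum_{I':\,I\subset I'}\nu(I')<d+1-\sum_{i\in I}\gamma_i$ for all $I\subset\{1,\dots,l\}$ with $|I|\ge2$; (3) $\sum_{I\in 2^{\{1,\dots,l\}}}\nu(I)=n$.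 *)

(* Defs.v *)
From HB Require Import structures.
From mathcomp Require Import all_boot all_order all_algebra.
Set Implicit Arguments. Unset Strict Implicit. Unset Printing Implicit Defensive.
Import Order.TTheory GRing.Theory Num.Theory.

(* Ground set {1,...,n} is modelled by 'I_n. *)

Definition codim (d : nat) {T : finType} (X : {set T}) : int :=
  (d.+1)%:Z - (#|X|)%:Z.

Definition rho (d : nat) {T : finType} (C : {set {set T}}) : int :=
  (\sum_(X in C) codim d X)%R.

Definition Dd (d : nat) {T : finType} (C : {set {set T}}) : int :=
  (codim d (\bigcap_(X in C) X) - rho d C)%R.

Definition inL (n d : nat) (C : {set {set 'I_n}}) : bool :=
  [forall C' : {set {set 'I_n}}, (C' \subset C) && (1 < #|C'|) ==> (0 < Dd d C')%R]
  && [forall X : {set 'I_n}, (X \in C) ==> (#|X| <= d)].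

(* Type gamma_d(T): the codims d+1-|T_i| listed with |T_i| increasing,
   i.e. sorted in weakly decreasing order; gamma_d(empty) = (0).
   (For T in L(n,d) all |T_i| <= d, so the nat subtraction is exact.) *)
Definition gtype (d : nat) {T : finType} (C : {set {set T}}) : seq nat :=
  if C == set0 then [:: 0]
  else sort geq [seq d.+1 - #|X| | X : {set T} <- enum C].

Definition lambda (n d : nat) (g : seq nat) : nat :=
  #|[set C : {set {set 'I_n}} | @inL n d C && (gtype d C == g)]|.

Definition mult (k : nat) (g : seq nat) : nat := count_mem k g.

(* nu in N(n,d;gamma), for nu : 2^{1..l} -> Z_{>=0}, with l = size g
   (index set {1..l} modelled by 'I_(size g)). *)
Definition inN (n d : nat) (g : seq nat)
    (nu : {set 'I_(size g)} -> nat) : bool :=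
  [forall i : 'I_(size g),
      ((\sum_(I : {set 'I_(size g)} | i \in I) nu I)%:Z
        == (d.+1)%:Z - (nth 0 g i)%:Z)%R]
  && [forall I : {set 'I_(size g)}, (1 < #|I|) ==>
      ((\sum_(I' : {set 'I_(size g)} | I \subset I') nu I')%:Z
        < (d.+1)%:Z - (\sum_(i in I) nth 0 g i)%:Z)%R]
  && (\sum_(I : {set 'I_(size g)}) nu I == n).

(* Main.v *)
Require Import Defs.
From HB Require Import structures.
From mathcomp Require Import all_boot all_order all_algebra.
From mathcomp Require Import fingroup perm.
Import Order.TTheory GRing.Theory Num.Theory.
Set Implicit Arguments. Unset Strict Implicit. Unset Printing Implicit Defensive.
From mathcomp Require Import zify.
Lemma H1 (a b c : nat) : ((a%:Z == b%:Z - c%:Z)%R) = (a + c == b).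
Proof. by apply/eqP/eqP => H; lia. Qed.
Lemma H2 (a b c : nat) : ((a%:Z < b%:Z - c%:Z)%R) = (a + c < b).
Proof. by apply/idP/idP => H; lia. Qed.
Lemma H3 (a b c : nat) : ((0 < b%:Z - a%:Z - c%:Z)%R) = (a + c < b).
Proof. by apply/idP/idP => H; lia. Qed.
Section Mult.
Variables (D S : finType) (s0 : S).

Definition okm (A : {set D}) (nu : S -> nat) (h : {ffun D -> S}) :=
  [forall x, (x \notin A) ==> (h x == s0)] &&
  [forall s, #|[set x in A | h x == s]| == nu s].

Lemma cnt_split (A : {set D}) a (h : D -> S) t : a \in A ->
  #|[set x in A | h x == t]| = (h a == t) + #|[set x in A :\ a | h x == t]|.
Proof.
move=> aA; rewrite (cardsD1 a) inE aA /=; congr (_ + _).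
by apply: eq_card => x; rewrite !inE andbA.
Qed.

Lemma multP k : forall (A : {set D}) (nu : S -> nat), #|A| = k ->
  \sum_s nu s = k -> #|[set h | okm A nu h]| * \prod_s (nu s)`! = k`!.
Proof.
elim: k => [|k IH] A nu cA snu.
  have A0 : A = set0 by apply/cards0_eq.
  have nu0 : forall s, nu s = 0.
    by move=> s; apply/eqP; move: snu => /eqP; rewrite sum_nat_eq0 => /forall_inP; apply.
  rewrite big1 ?muln1; last by move=> s _; rewrite nu0.
  rewrite (@eq_card1 _ [ffun=> s0]) // => h; rewrite !inE /okm A0.
  apply/andP/eqP => [[/forallP H _]|->].
    by apply/ffunP => x; rewrite ffunE; apply/eqP; have := H x; rewrite inE.
  split; first by apply/forallP => x; rewrite ffunE eqxx implybT.
  by apply/forallP => s; rewrite nu0 cards_eq0; apply/eqP/setP => x; rewrite !inE.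
have [a aA] : exists a, a \in A.
  by apply/set0Pn; rewrite -card_gt0 cA.
have cA' : #|A :\ a| = k by move: cA; rewrite (cardsD1 a) aA add1n => -[].
have -> : #|[set h | okm A nu h]| = \sum_s #|[set h | okm A nu h & h a == s]|.
  rewrite -sum1_card (partition_big (fun h : {ffun D -> S} => h a) xpredT) //=.
  by apply: eq_bigr => s _; rewrite -sum1_card; apply: eq_bigl => h; rewrite !inE.
rewrite big_distrl /= (eq_bigr (fun s => nu s * k`!)); last first.
  move=> s _.
  have [nus0|nuspos] := posnP (nu s).
    rewrite nus0 mul0n (_ : #|_| = 0) ?mul0n //.
    apply: eq_card0 => h; rewrite !inE; apply/negP => /andP[/andP[_ /forallP /(_ s)]].
    by rewrite nus0 (cnt_split _ _ aA) => /eqP + /eqP has; rewrite has eqxx.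
  pose nu' := fun t => if t == s then (nu s).-1 else nu t.
  have snu' : \sum_t nu' t = k.
    move: snu; rewrite (bigD1 s) //= => snu; rewrite (bigD1 s) //= /nu' eqxx.
    rewrite (eq_bigr nu) => [|t /negbTE ->//].
    by move: snu; rewrite -(prednK nuspos) addSn => -[].
  have Hp : \prod_t (nu t)`! = nu s * \prod_t (nu' t)`!.
    rewrite (bigD1 s) //= [X in _ = _ * X](bigD1 s) //= /nu' eqxx mulnA -{1}(prednK nuspos) factS.
    by rewrite prednK //; congr (_ * _); apply: eq_bigr => t /negbTE ->.
  have IH' := IH _ _ cA' snu'.
  pose G (h' : {ffun D -> S}) := [ffun x => if x == a then s else h' x].
  have -> : #|[set h | okm A nu h & h a == s]| = #|[set h | okm (A :\ a) nu' h]|.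
    have -> : [set h | okm A nu h & h a == s] = G @: [set h | okm (A :\ a) nu' h].
      apply/setP => h; rewrite inE; apply/andP/imsetP.
        move=> [/andP[/forallP Ho /forallP Hc] /eqP ha].
        exists [ffun x => if x == a then s0 else h x].
          rewrite inE; apply/andP; split.
            apply/forallP => x; rewrite ffunE !inE.
            case: (x =P a) => [_|_] /=; first by rewrite ?eqxx ?implybT.
            exact: Ho x.
          apply/forallP => t; have := Hc t; rewrite (cnt_split _ _ aA) ha.
          have -> : [set x in A :\ a | [ffun x0 => if x0 == a then s0 else h x0] x == t]
                  = [set x in A :\ a | h x == t].
            by apply/setP => x; rewrite !inE ffunE; case: (x =P a) => [->|]; rewrite ?eqxx //=.
          move/eqP => E; rewrite /nu'; case: (t =P s) => [ts|tns].
            by subst t; rewrite eqxx add1n in E; rewrite -E.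
          by rewrite (introF eqP (fun e => tns (esym e))) add0n in E; rewrite E.
        by apply/ffunP => x; rewrite !ffunE; case: eqP => [->|]; rewrite ?ha.
      move=> [h' /[!inE] /andP[/forallP Ho /forallP Hc] ->].
      split; last by rewrite /G ffunE eqxx.
      apply/andP; split.
        apply/forallP => x; rewrite /G ffunE; apply/implyP => xA.
        case: (x =P a) => [xa|_]; first by rewrite xa aA in xA.
        by apply: (implyP (Ho x)); rewrite !inE negb_and xA orbT.
      apply/forallP => t; rewrite (cnt_split _ _ aA) /G ffunE eqxx.
      have -> : [set x in A :\ a | [ffun x0 => if x0 == a then s else h' x0] x == t]
              = [set x in A :\ a | h' x == t].
        by apply/setP => x; rewrite !inE ffunE; case: (x =P a) => [->|]; rewrite ?eqxx //=.
      move/eqP: (Hc t) => E; rewrite E /nu'; case: (t =P s) => [->|tns].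
        by rewrite eqxx add1n prednK.
      by rewrite (introF eqP (fun e => tns (esym e))).
    rewrite card_in_imset // => h1 h2 /[!inE] /andP[/forallP H1 _] /andP[/forallP H2 _] E.
    apply/ffunP => x; have := congr1 (fun f : {ffun D -> S} => f x) E; rewrite /G !ffunE.
    case: eqP => [->|//] _.
    have := H1 a; have := H2 a; rewrite !inE eqxx /= => /eqP -> /eqP -> //.
  by rewrite Hp mulnCA IH'.
by rewrite -big_distrl /= snu factS.
Qed.

End Mult.
Section PermCount.
Variables (L K : finType) (c : L -> K).

Definition okp (A : {set L}) (s : {perm L}) :=
  perm_on A s && [forall i, c (s i) == c i].

Lemma c_tperm a b y : c a = c b -> c (tperm a b y) = c y.
Proof. by move=> cab; case: tpermP => [->|->|]. Qed.

Lemma permCount k : forall (A : {set L}), #|A| = k ->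
  #|[set s | okp A s]| = \prod_(kk : K) (#|[set i in A | c i == kk]|)`!.
Proof.
elim: k => [|k IH] A cA.
  have A0 : A = set0 by apply/cards0_eq.
  rewrite big1; last by move=> kk _; rewrite A0 (_ : [set i in set0 | _] = set0) ?cards0 //; apply/setP => i; rewrite !inE.
  rewrite (@eq_card1 _ 1%g) // => s; rewrite !inE /okp.
  apply/andP/eqP => [[ps _]|->]; first by apply: perm_on_id ps _; rewrite A0 cards0.
  by split; [apply: perm_on1 | apply/forallP => i; rewrite perm1].
have [a aA] : exists a, a \in A.
  by apply/set0Pn; rewrite -card_gt0 cA.
have cA' : #|A :\ a| = k by move: cA; rewrite (cardsD1 a) aA add1n => -[].
have -> : #|[set s | okp A s]| = \sum_b #|[set s | okp A s & s a == b]|.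
  rewrite -sum1_card (partition_big (fun s : {perm L} => s a) xpredT) //=.
  by apply: eq_bigr => b _; rewrite -sum1_card; apply: eq_bigl => s; rewrite !inE.
rewrite (eq_bigr (fun b => ((b \in A) && (c b == c a)) * #|[set s | okp (A :\ a) s]|)); last first.
  move=> b _.
  have [/andP[bA cba]|nb] := boolP ((b \in A) && (c b == c a)); last first.
    rewrite mul0n; apply: eq_card0 => s; rewrite !inE /okp; apply/negP.
    move=> /andP[/andP[ps /forallP cs] /eqP sab]; move/negP: nb; apply; apply/andP; split.
      by rewrite -sab (perm_closed _ ps).
    by rewrite -sab cs.
  rewrite mul1n.
  have -> : [set s | okp A s & s a == b] = (fun t => (t * tperm a b)%g) @: [set s | okp (A :\ a) s].
    apply/setP => s; rewrite inE; apply/andP/imsetP.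
      move=> [/andP[ps /forallP cs] /eqP sab].
      exists (s * tperm a b)%g; last first.
        by apply/permP => x; rewrite !permM tpermK.
      rewrite inE /okp; apply/andP; split; last first.
        apply/forallP => x; rewrite permM c_tperm; [exact: cs | by apply/esym/eqP].
      apply/subsetP => x; rewrite inE permM => nx.
      have xa : x != a by apply: contraNneq nx => ->; rewrite sab tpermR.
      rewrite !inE xa /=; apply: contraNT nx => xnA.
      rewrite (out_perm ps xnA) tpermD //; first by rewrite eq_sym.
      by apply: contraNneq xnA => <-.
    move=> [t /[!inE] /andP[pt /forallP ct] ->].
    have ta : t a = a by apply/eqP; apply: contraT => ta; move: (subsetP pt a); rewrite !inE ta eqxx /= => /(_ isT).
    split; last by rewrite permM ta tpermL.
    apply/andP; split.
      apply: perm_onM; first by apply: subset_trans pt (subsetDl _ _).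
      by apply: subset_trans (tperm_on a b) _; apply/subsetP => x; rewrite !inE => /orP[] /eqP ->.
    by apply/forallP => x; rewrite permM c_tperm ?ct //; apply/esym/eqP.
  by rewrite card_imset //; apply: mulIg.
rewrite -big_distrl /= (IH _ cA').
have -> : \sum_b ((b \in A) && (c b == c a)) = #|[set i in A | c i == c a]|.
  rewrite -sum1_card [RHS]big_mkcond /=; apply: eq_bigr => b _; rewrite inE; by case: (_ && _).
rewrite [RHS](bigD1 (c a)) //= [X in _ * X](bigD1 (c a)) //= mulnA; congr (_ * _).
  by rewrite (cnt_split _ _ aA) eqxx add1n factS.
apply: eq_bigr => kk nk; rewrite (cnt_split _ _ aA) eq_sym (negbTE nk) //.
Qed.
End PermCount.
Lemma geq_tot : total geq. Proof. by move=> a b; rewrite /= leq_total. Qed.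
Lemma geq_tr : transitive geq. Proof. by move=> a b c /= H1 H2; exact: leq_trans H2 H1. Qed.
Lemma geq_anti : antisymmetric geq. Proof. by move=> a b /andP[H1 H2]; apply/eqP; rewrite eqn_leq; apply/andP; split. Qed.

Lemma map_nth_enum (g : seq nat) : map (fun i : 'I_(size g) => nth 0 g i) (enum 'I_(size g)) = g.
Proof.
by rewrite (map_comp (nth 0 g) val) val_enum_ord -/(mkseq _ _) mkseq_nth.
Qed.

Lemma count_card (g : seq nat) k : #|[set i : 'I_(size g) | nth 0 g i == k]| = count_mem k g.
Proof.
have E := congr1 (count (pred1 k)) (map_nth_enum g).
rewrite count_map enumT in E; rewrite -E cardE /enum_mem size_filter.
by apply: eq_count => i; rewrite !inE.
Qed.

Section Main.
Variables (n d : nat) (g : seq nat).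
Hypotheses (gpos : all (fun x => 0 < x) g) (gsort : sorted geq g) (l0 : 0 < size g).
Local Notation L := 'I_(size g).

Definition im (f : {ffun L -> {set 'I_n}}) := f @: [set: L].
Definition goodf (f : {ffun L -> {set 'I_n}}) :=
  [forall i, #|f i| + nth 0 g i == d.+1] && injectiveb f && @inL n d (im f).
Definition Aset := [set f | goodf f].
Definition Pset := [set s : {perm L} | [forall i, nth 0 g (s i) == nth 0 g i]].

Lemma gpos_i (i : L) : 0 < nth 0 g i.
Proof. exact: (all_nthP 0 gpos i (ltn_ord i)). Qed.

Lemma gtype_im f : goodf f -> gtype d (im f) = g.
Proof.
move=> /andP[/andP[/forallP sz /injectiveP finj] _].
rewrite /gtype.
have -> : (im f == set0) = false.
  by apply/negbTE/set0Pn; exists (f (Ordinal l0)); rewrite /im imset_f // inE.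
have pe : perm_eq [seq d.+1 - #|X| | X : {set 'I_n} <- enum (im f)] g.
  have e1 : perm_eq (enum (im f)) [seq f i | i <- enum L].
    apply: uniq_perm; [by rewrite enum_uniq | by rewrite map_inj_uniq ?enum_uniq | ].
    move=> X; rewrite mem_enum; apply/imsetP/mapP => -[i _ ->]; exists i => //.
    by rewrite mem_enum.
  apply: (perm_trans (perm_map _ e1)); rewrite -map_comp.
  rewrite -[X in perm_eq _ X]map_nth_enum (eq_map (g := fun i : L => nth 0 g i)) //.
  by move=> i /=; move/eqP: (sz i) => <-; rewrite addKn.
have /(perm_sortP geq_tot geq_tr geq_anti) -> := pe.
exact: (sorted_sort geq_tr gsort).
Qed.

Lemma exists_f0 C : @inL n d C -> gtype d C = g -> exists2 f0, goodf f0 & im f0 = C.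
Proof.
move=> iLC gt.
have C0 : C != set0.
  apply/negP => /eqP C0; move: gt; rewrite /gtype C0 eqxx => g0.
  by move: gpos; rewrite -g0.
move: gt; rewrite /gtype (negbTE C0) => gt.
set s := [seq d.+1 - #|X| | X : {set 'I_n} <- enum C] in gt.
have pe : perm_eq g s by rewrite -gt perm_sort.
have szC : forall X, X \in C -> #|X| <= d.
  by move: iLC => /andP[_ /forallP H] X XC; exact: (implyP (H X) XC).
case/(perm_iotaP 0): pe => Is pIs gE.
have sIs : size Is = size g by rewrite gE size_map.
have ss : size s = size (enum C) by rewrite size_map.
have uIs : uniq Is by rewrite (perm_uniq pIs) iota_uniq.
have jlt : forall i : L, nth 0 Is i < size (enum C).
  move=> i; have : nth 0 Is i \in Is by rewrite mem_nth // sIs.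
  by rewrite (perm_mem pIs) mem_iota add0n ss.
pose f0 := [ffun i : L => nth set0 (enum C) (nth 0 Is i)].
have f0C : forall i, f0 i \in C by move=> i; rewrite ffunE -mem_enum mem_nth.
have f0inj : injective f0.
  move=> i i'; rewrite !ffunE => /eqP; rewrite nth_uniq ?enum_uniq // => /eqP.
  move/eqP; rewrite nth_uniq ?sIs // => /eqP; exact: val_inj.
have imf0 : im f0 = C.
  apply/setP => X; apply/imsetP/idP => [[i _ ->]|XC]; first exact: f0C.
  have jC : index X (enum C) < size (enum C) by rewrite index_mem mem_enum.
  have jIs : index X (enum C) \in Is by rewrite (perm_mem pIs) mem_iota add0n ss jC.
  have iI : index (index X (enum C)) Is < size g by rewrite -sIs index_mem.
  exists (Ordinal iI) => //; rewrite ffunE /= nth_index // nth_index //.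
  by rewrite mem_enum.
exists f0 => //; rewrite /goodf imf0 iLC andbT; apply/andP; split; last exact/injectiveP.
have E : forall j, j < size g -> nth 0 g j = nth 0 s (nth 0 Is j).
  by move=> j jl; rewrite [in LHS]gE (nth_map 0) ?sIs.
apply/forallP => i; rewrite ffunE E // /s (nth_map set0) // subnKC //.
by apply: leqW; apply: szC; rewrite -mem_enum mem_nth.
Qed.
Lemma fiber_card f0 : goodf f0 -> #|[set f in Aset | im f == im f0]| = #|Pset|.
Proof.
move=> gf0; have := gf0; move=> /andP[/andP[/forallP sz0 /injectiveP f0inj] iL0].
pose comp (s : {perm L}) := [ffun i => f0 (s i)].
have compinj : injective comp.
  move=> s t E; apply/permP => i.
  by apply: f0inj; have := congr1 (fun h : {ffun L -> {set 'I_n}} => h i) E; rewrite !ffunE.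
suff -> : [set f in Aset | im f == im f0] = comp @: Pset by rewrite card_imset.
apply/setP => f; rewrite !inE; apply/andP/imsetP.
  move=> [/andP[/andP[/forallP sz /injectiveP finj] _] /eqP imf].
  have ex : forall i, exists j, f0 j == f i.
    move=> i; have : f i \in im f by rewrite imset_f.
    by rewrite imf => /imsetP[j _ ->]; exists j.
  pose s0 i := odflt i [pick j | f0 j == f i].
  have s0E : forall i, f0 (s0 i) = f i.
    move=> i; rewrite /s0; case: pickP => [j /eqP //|H]; have [j Hj] := ex i.
    by move: (H j); rewrite Hj.
  have s0inj : injective s0.
    by move=> i i' E; apply: finj; rewrite -!s0E E.
  exists (perm s0inj).
    rewrite inE; apply/forallP => i; rewrite permE.
    have := sz i; have := sz0 (s0 i); rewrite s0E => /eqP <- /eqP /addnI ->.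
    by [].
  by apply/ffunP => i; rewrite ffunE permE s0E.
move=> [s /[!inE] /forallP Ps ->].
have ims : im (comp s) = im f0.
  apply/setP => X; apply/imsetP/imsetP => -[i _ ->].
    by exists (s i) => //; rewrite ffunE.
  by exists (s^-1 i)%g => //; rewrite ffunE permKV.
split; last by rewrite ims.
rewrite /goodf ims iL0 andbT; apply/andP; split.
  apply/forallP => i; rewrite ffunE -(eqP (Ps i)); exact: sz0.
apply/injectiveP => i j; rewrite !ffunE => /f0inj; exact: perm_inj.
Qed.
Lemma part1 : lambda n d g * #|Pset| = #|Aset|.
Proof.
rewrite -[#|Aset|]sum1_card (partition_big im (fun C => @inL n d C && (gtype d C == g))) /=; last first.
  move=> f; rewrite inE => gf; rewrite gtype_im // eqxx andbT.
  by case/andP: gf.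
rewrite /lambda -sum_nat_const; apply: eq_big => C; first by rewrite inE.
rewrite inE => /andP[iLC /eqP gC].
have [f0 gf0 <-] := exists_f0 iLC gC.
by rewrite -(fiber_card gf0) -sum1_card; apply: eq_bigl => f; rewrite !inE.
Qed.
Definition tr (f : {ffun L -> {set 'I_n}}) : {ffun 'I_n -> {set L}} :=
  [ffun x => [set i | x \in f i]].
Definition untr (h : {ffun 'I_n -> {set L}}) : {ffun L -> {set 'I_n}} :=
  [ffun i => [set x | i \in h x]].
Lemma untrK : cancel tr untr.
Proof. by move=> f; apply/ffunP => i; apply/setP => x; rewrite !ffunE !inE ffunE inE. Qed.
Lemma trK : cancel untr tr.
Proof. by move=> h; apply/ffunP => x; apply/setP => i; rewrite !ffunE !inE ffunE inE. Qed.

Definition nuh (h : {ffun 'I_n -> {set L}}) (I : {set L}) := #|[set x | h x == I]|.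

Lemma card_pred_h (h : {ffun 'I_n -> {set L}}) (P : pred {set L}) :
  #|[set x | P (h x)]| = \sum_(I | P I) nuh h I.
Proof.
rewrite -sum1_card (partition_big h P) /=; last by move=> x; rewrite inE.
by apply: eq_bigr => I PI; rewrite /nuh -sum1_card; apply: eq_bigl => x; rewrite !inE;
  case: (h x =P I) => [->|]; rewrite ?PI ?andbF.
Qed.

Lemma Dd_im (f : {ffun L -> {set 'I_n}}) (I : {set L}) : injective f ->
  (forall i, #|f i| + nth 0 g i = d.+1) ->
  Dd d (f @: I) = (d.+1%:Z - #|\bigcap_(i in I) f i|%:Z - (\sum_(i in I) nth 0 g i)%:Z)%R.
Proof.
move=> finj sz; rewrite /Dd /codim /rho.
rewrite (big_imset (fun X : {set 'I_n} => X)) /=; last by move=> i j _ _; apply: finj.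
rewrite (big_imset (fun X : {set 'I_n} => (d.+1%:Z - #|X|%:Z)%R)) /=; last by move=> i j _ _; apply: finj.
congr (_ - _)%R; rewrite -[RHS]natz natr_sum; apply: eq_bigr => i _.
by rewrite natz -(sz i) PoszD addrC addKr.
Qed.
Lemma goodf_iff (f : {ffun L -> {set 'I_n}}) : goodf f =
  [forall i, #|f i| + nth 0 g i == d.+1] &&
  [forall I : {set L}, (1 < #|I|) ==>
      (#|\bigcap_(i in I) f i| + \sum_(i in I) nth 0 g i < d.+1)].
Proof.
apply/idP/idP.
  move=> /andP[/andP[/forallP sz /injectiveP finj] /andP[/forallP iL1 _]].
  apply/andP; split; first exact/forallP.
  apply/forallP => I; apply/implyP => I1.
  have := implyP (iL1 (f @: I)); rewrite card_imset // I1 andbT.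
  rewrite /im imsetS ?subsetT // => /(_ isT).
  by rewrite Dd_im // ?H3 // => i; apply/eqP.
move=> /andP[/forallP sz /forallP cp].
have finj : injective f.
  move=> i j E; apply/eqP; apply: contraT => nij.
  have := implyP (cp [set i; j]); rewrite cards2 nij /= => /(_ isT).
  rewrite big_setU1 ?big_set1; last by rewrite inE.
  rewrite big_setU1 ?big_set1 /=; last by rewrite inE.
  rewrite -E setIid addnA (eqP (sz i)).
  by rewrite ltnNge leq_addr.
rewrite /goodf; apply/andP; split; first by apply/andP; split; [exact/forallP | exact/injectiveP].
apply/andP; split.
  apply/forallP => C'; apply/implyP => /andP[sC C1].
  have eC : C' = f @: (f @^-1: C').
    apply/setP => X; apply/idP/imsetP => [XC|[i /[!inE] fi ->]//].
    by have /imsetP[i _ Xi] := subsetP sC X XC; exists i; rewrite // inE -Xi.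
  move: C1; rewrite eC card_imset // => C1.
  by rewrite Dd_im ?H3; [exact: (implyP (cp _) C1) | | move=> i; apply/eqP].
apply/forallP => X; apply/implyP => /imsetP[i _ ->].
by have := eqP (sz i); have := gpos_i i; lia.
Qed.
Lemma key (h : {ffun 'I_n -> {set L}}) (nu : {set L} -> nat) :
  (forall I, nu I = nuh h I) -> @inN n d g nu = goodf (untr h).
Proof.
move=> Enu; rewrite goodf_iff /inN.
have fsz (i : L) : \sum_(I : {set L} | i \in I) nu I = #|untr h i|.
  rewrite ffunE (card_pred_h h (fun I => i \in I)); apply: eq_bigr => I _; exact: Enu.
have fcap (I : {set L}) : \sum_(I' : {set L} | I \subset I') nu I' = #|\bigcap_(i in I) untr h i|.
  have -> : \bigcap_(i in I) untr h i = [set x | I \subset h x].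
    apply/setP => x; rewrite inE; apply/bigcapP/subsetP => H i iI.
      by have := H i iI; rewrite ffunE inE.
    by rewrite ffunE inE; exact: H.
  rewrite (card_pred_h h (fun I' => I \subset I')); apply: eq_bigr => I' _; exact: Enu.
have ftot : \sum_I nu I = n.
  rewrite (eq_bigr (nuh h)) // -(card_pred_h h predT).
  by rewrite (_ : [set x | predT (h x)] = setT) ?cardsT ?card_ord //; apply/setP => x; rewrite !inE.
rewrite ftot eqxx andbT; congr (_ && _).
  by apply: eq_forallb => i; rewrite fsz H1.
by apply: eq_forallb => I; rewrite fcap H2.
Qed.

Definition nuo (h : {ffun 'I_n -> {set L}}) : {ffun {set L} -> 'I_n.+1} :=
  [ffun I => inord (nuh h I)].

Lemma nuoE h I : val (nuo h I) = nuh h I.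
Proof.
rewrite ffunE /= inordK // ltnS /nuh.
by rewrite -[X in _ <= X]card_ord max_card.
Qed.

Lemma part2 : #|Aset| = \sum_(nu : {ffun {set L} -> 'I_n.+1} | @inN n d g (fun I => val (nu I)))
   #|[set h | nuo h == nu]|.
Proof.
have -> : #|Aset| = #|[set h | goodf (untr h)]|.
  rewrite -(card_imset _ (can_inj untrK)); apply: eq_card => h; rewrite inE.
  apply/imsetP/idP => [[f fA ->]|H]; first by rewrite untrK -[goodf f]inE.
  by exists (untr h); rewrite ?inE ?trK.
rewrite -sum1_card (partition_big nuo (fun nu => @inN n d g (fun I => val (nu I)))) /=; last first.
  by move=> h; rewrite inE (key (nuoE h)).
apply: eq_bigr => nu Hnu; rewrite -sum1_card; apply: eq_bigl => h; rewrite !inE.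
apply/andP/idP => [[]//|E]; split => //.
by rewrite -(key (nuoE h)) (eqP E).
Qed.

Lemma multcount (nu : {ffun {set L} -> 'I_n.+1}) : \sum_I val (nu I) = n ->
  #|[set h | nuo h == nu]| * \prod_I (val (nu I))`! = n`!.
Proof.
move=> snu.
have := @multP 'I_n {set L} set0 n setT (fun I => val (nu I)); rewrite cardsT card_ord.
move=> /(_ erefl snu) <-; congr (_ * _); apply: eq_card => h; rewrite !inE.
rewrite /okm; apply/eqP/andP => [E|[_ /forallP H]].
  split; first by apply/forallP => x; rewrite inE.
  by apply/forallP => I; rewrite -E nuoE /nuh; apply/eqP; apply: eq_card => x; rewrite !inE.
apply/ffunP => I; apply: val_inj; rewrite nuoE -(eqP (H I)) /nuh; apply: eq_card => x.
by rewrite !inE.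
Qed.
Lemma part3 f : goodf f -> #|Pset| = \prod_(1 <= k < d.+1) (mult k g)`!.
Proof.
move=> /andP[/andP[/forallP sz /injectiveP finj] _].
have gle : forall i : L, nth 0 g i < d.+2.
  by move=> i; rewrite ltnS -(eqP (sz i)) leq_addl.
pose c := fun i : L => (inord (nth 0 g i) : 'I_(d.+2)).
have -> : Pset = [set s | okp c setT s].
  apply/setP => s; rewrite !inE /okp; apply/forallP/andP => [H|[_ /forallP H] i].
    split; first by apply/subsetP => x; rewrite inE.
    by apply/forallP => i; rewrite /c (eqP (H i)).
  by have := H i; rewrite /c => /eqP /(congr1 val); rewrite /= !inordK // => ->.
rewrite (permCount c (erefl _)).
rewrite (eq_bigr (fun kk : 'I_(d.+2) => (mult kk g)`!)); last first.
  move=> kk _; congr (_ `!); rewrite /mult -count_card; apply: eq_card => i; rewrite !inE.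
  rewrite /=; apply/eqP/eqP => E; first by rewrite -E /c /= inordK.
  by apply: val_inj; rewrite /c /= inordK.
rewrite big_ord_recr big_ord_recl /=.
have m0 : mult 0 g = 0.
  apply/eqP; rewrite -leqn0 leqNgt -has_count; apply/hasP => -[x xg /eqP x0].
  by move: (allP gpos x xg); rewrite /= x0.
have m1 : mult d.+1 g <= 1.
  rewrite /mult -count_card; apply/card_le1_eqP => i j /[!inE] /eqP gi /eqP gj.
  apply: finj.
  have := eqP (sz i); have := eqP (sz j); rewrite gi gj => E1 E2.
  have Fi : f i = set0 by apply/eqP; rewrite -cards_eq0; apply/eqP; lia.
  have Fj : f j = set0 by apply/eqP; rewrite -cards_eq0; apply/eqP; lia.
  by rewrite Fi Fj.
have -> : (mult d.+1 g)`! = 1 by case: (mult d.+1 g) m1 => [|[]].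
rewrite m0 fact0 mul1n muln1 big_add1 /= big_mkord.
by apply: eq_bigr => i _; rewrite /bump /=.
Qed.
End Main.
From mathcomp Require Import ring.

Lemma prod_fact_neq0 (T : finType) (P : pred T) (F : T -> nat) :
  (\prod_(i | P i) ((F i)`!)%:R : rat) != 0%R.
Proof. by rewrite -natr_prod pnatr_eq0 -lt0n prodn_gt0 // => *; apply: fact_gt0. Qed.

Unset Implicit Arguments.

Theorem proposition4p7 (n d : nat) (g : seq nat) :
  d < n -> 0 < size g -> all (fun x => 0 < x) g -> sorted geq g ->
  ((lambda n d g)%:R : rat)
    = ((\prod_(1 <= k < d.+1) ((mult k g)`!)%:R)^-1 *
       \sum_(nu : {ffun {set 'I_(size g)} -> 'I_n.+1}
              | @inN n d g (fun I => val (nu I)))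
          ((n`!)%:R / (\prod_(I : {set 'I_(size g)}) ((val (nu I))`!)%:R)))%R
  /\ ((lambda n d g)%:R : rat)
    = ((\prod_(1 <= k < d.+1) ((mult k g)`!)%:R)^-1 *
       \sum_(nu : {ffun {set 'I_(size g)} -> 'I_n.+1}
              | @inN n d g (fun I => val (nu I)))
          (((\sum_(I : {set 'I_(size g)} | I != set0) val (nu I))`!)%:R
            / (\prod_(I : {set 'I_(size g)} | I != set0) ((val (nu I))`!)%:R)
            * ('C(n, \sum_(I : {set 'I_(size g)} | I != set0) val (nu I)))%:R))%R.
Proof.
move=> dn l0 gpos gsort.
have sumN : forall nu : {ffun {set 'I_(size g)} -> 'I_n.+1},
    @inN n d g (fun I => val (nu I)) -> \sum_I val (nu I) = n.
  by move=> nu /andP[_ /eqP].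
have S1 : (\sum_(nu : {ffun {set 'I_(size g)} -> 'I_n.+1} | @inN n d g (fun I => val (nu I)))
          ((n`!)%:R / (\prod_(I : {set 'I_(size g)}) ((val (nu I))`!)%:R))
          = (#|Aset n d g|)%:R :> rat)%R.
  rewrite (part2 n d gpos gsort l0) natr_sum; apply: eq_bigr => nu Hnu.
  rewrite -(multcount (sumN _ Hnu)) natrM natr_prod mulfK //.
  exact: prod_fact_neq0 (fun=> true) (fun I => val (nu I)).
have E1 : ((lambda n d g)%:R : rat) =
    ((\prod_(1 <= k < d.+1) ((mult k g)`!)%:R)^-1 * (#|Aset n d g|)%:R)%R.
  have [A0|Apos] := posnP #|Aset n d g|.
    have := part1 n d gpos gsort l0; rewrite A0 => /eqP; rewrite muln_eq0.
    have -> : (#|Pset g| == 0) = false.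
      by apply/negbTE; rewrite -lt0n card_gt0; apply/set0Pn; exists 1%g; rewrite inE;
         apply/forallP => i; rewrite perm1.
    by rewrite orbF => /eqP ->; rewrite mulr0.
  have [f] : exists f, f \in Aset n d g by apply/set0Pn; rewrite -card_gt0.
  rewrite inE => gf.
  rewrite -(part1 n d gpos gsort l0) (part3 gpos gsort l0 gf) natrM natr_prod.
  rewrite mulrC mulfK //.
  by rewrite -natr_prod pnatr_eq0 -lt0n prodn_gt0 // => *; apply: fact_gt0.
split; first by rewrite E1 S1.
rewrite E1 -S1; congr (_ * _)%R; apply: eq_bigr => nu Hnu.
have sn := sumN _ Hnu.
rewrite (bigD1 set0) //= in sn; rewrite [X in (_ / X)%R](bigD1 set0) //=.
set a := val (nu set0) in sn *.
set s := \sum_(I | I != set0) val (nu I) in sn *.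
set Q := (\prod_(I | I != set0) ((val (nu I))`!)%:R)%R.
have sle : s <= n by rewrite -sn leq_addl.
have Ea : n - s = a by rewrite -sn addnK.
have := bin_fact sle; rewrite Ea => En.
rewrite -En !natrM.
have Q0 : Q != 0%R by exact: prod_fact_neq0 (fun I => I != set0) (fun I => val (nu I)).
have a0 : ((a`!)%:R : rat) != 0%R by rewrite pnatr_eq0 -lt0n fact_gt0.
field; by rewrite Q0 a0.
Qed.
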